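(* Let $T_1,T_2$ be rooted trees in which every leaf of $T_i$ has depth $h_i$. A prefix is a pair $p=(p_1,p_2)$ with $p_i$ a node of $T_i$; it is fully specified if both $p_1,p_2$ are leaves. Write $e\preceq p$ if for each $i$, $p_i$ is an ancestor of or equal to $e_i$, and $e\prec p$ if $e\preceq p$ and $e\ne p$. For a finite nonempty set $X$ of prefixes, if for each $i$ the nodes $\{x_i:x\in X\}$ are pairwise comparable in $T_i$ (each is an ancestor of or equal to the other), let $\mathrm{glb}(X)$ be the prefix whose $i$-th coordinate is the deepest of these nodes; otherwise $\mathrm{glb}(X)$ is undefined (a trivial item, contributing count $0$). Let $S$ be a finite multiset of fully specified elements, $f(e)$ the multiplicity of $e$, $f(p)=\sum_{e\in S,\,e\preceq p}f(e)$ for a prefix $p$. Let $P$ be any set of prefixes and $p$ a prefix; set $P_p=\{q\in P:q\prec p\}$, $F_p=\sum f(e)$ over fully specified $e\preceq p$ with $e\not\preceq q$ for all $q\in P_p$, and $H_p=\{h\in P: h\prec p,\ \nexists h'\in P \text{ with } h\prec h'\prec p\}$. Let $T_p$ be the set of prefixes $q$ such that $q=\mathrm{glb}(\{h,h'\})$ for some two distinct $h,h'\in H_p$, but $q$ is not equal to $\mathrm{glb}(X)$ for any $X\subseteq H_p$ with $|X|\ge 3$. Then $$F_p=f(p)-\sum_{q\in H_p}f(q)+\sum_{q\in T_p}f(q).$$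
   Context: Two-dimensional hierarchical setting (e.g. source/destination IP address pairs, each coordinate generalized by wildcarding trailing bytes). $f(p)$ is the unconditioned count and $F_p$ the conditioned count of $p$ with respect to $P$. *)

(* Defs.v *)
From mathcomp Require Import all_boot all_order all_algebra.
Set Implicit Arguments. Unset Strict Implicit. Unset Printing Implicit Defensive.

Definition rooted_tree (V : finType) (r : V) (par : V -> V) : Prop :=
  par r = r /\ forall v : V, exists k, iter k par v = r.

(* [anc par u v]: u is an ancestor of, or equal to, v.  The bound #|V| on
   the number of parent steps is harmless (any ancestor is reached in fewer
   than #|V| steps). *)
Definition anc (V : finType) (par : V -> V) (u v : V) : bool :=
  [exists k : 'I_#|V|.+1, iter k par v == u].

Definition comparable (V : finType) (par : V -> V) (u v : V) : bool :=
  anc par u v || anc par v u.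

Definition is_leaf (V : finType) (par : V -> V) (v : V) : bool :=
  [forall w, (par w == v) ==> (w == v)].

Definition has_depth (V : finType) (r : V) (par : V -> V) (v : V) (h : nat) : Prop :=
  iter h par v = r /\ forall k, k < h -> iter k par v <> r.

Section Prefixes.
Variables (V1 V2 : finType) (par1 : V1 -> V1) (par2 : V2 -> V2).

Definition pre (e p : V1 * V2) : bool := anc par1 p.1 e.1 && anc par2 p.2 e.2.
Definition prec (e p : V1 * V2) : bool := pre e p && (e != p).

Definition fully (e : V1 * V2) : bool := is_leaf par1 e.1 && is_leaf par2 e.2.

(* [glb_is X q] : glb(X) is defined and equals q. *)
Definition glb_is (X : {set V1 * V2}) (q : V1 * V2) : bool :=
  [&& X != set0,
      [forall x in X, forall y in X,
         comparable par1 x.1 y.1 && comparable par2 x.2 y.2],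
      [exists x in X, x.1 == q.1],
      [exists x in X, x.2 == q.2] &
      [forall x in X, anc par1 x.1 q.1 && anc par2 x.2 q.2]].

Definition fcount (f : V1 * V2 -> nat) (p : V1 * V2) : nat :=
  \sum_(e | pre e p) f e.

Definition Pset (P : {set V1 * V2}) (p : V1 * V2) : {set V1 * V2} :=
  [set q in P | prec q p].

Definition Fcond (f : V1 * V2 -> nat) (P : {set V1 * V2}) (p : V1 * V2) : nat :=
  \sum_(e | [&& fully e, pre e p & [forall q in Pset P p, ~~ pre e q]]) f e.

Definition Hset (P : {set V1 * V2}) (p : V1 * V2) : {set V1 * V2} :=
  [set h in P | prec h p && ~~ [exists h', (h' \in P) && prec h h' && prec h' p]].

Definition Tset (P : {set V1 * V2}) (p : V1 * V2) : {set V1 * V2} :=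
  [set q | [exists h in Hset P p, exists h' in Hset P p,
              (h != h') && glb_is [set h; h'] q]
           && ~~ [exists X : {set V1 * V2},
                    [&& X \subset Hset P p, 2 < #|X| & glb_is X q]]].

End Prefixes.

(* Main.v *)
Require Import Defs.
From mathcomp Require Import all_boot all_order all_algebra.
From mathcomp Require Import zify.
Set Implicit Arguments. Unset Strict Implicit. Unset Printing Implicit Defensive.





Section Tree.
Variables (V : finType) (r : V) (par : V -> V).
Variable T : rooted_tree r par.

Lemma iter_r n : iter n par r = r.
Proof. by apply: iter_fix; case: T. Qed.

Lemma iter_cycle v i j : i < j -> iter i par v = iter j par v -> iter i par v = r.
Proof.
move=> lij E; set w := iter i par v.
have Ew : iter (j - i) par w = w by rewrite /w -iterD subnK // ltnW.
have Em : forall m, iter (m * (j - i)) par w = w.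
  elim=> [|m IH] //=; by rewrite mulSn iterD IH Ew.
case: T => _ /(_ w) [k Hk].
rewrite -(Em k).
have Hle : k <= k * (j - i) by rewrite leq_pmulr // subn_gt0.
by rewrite -(subnK Hle) iterD Hk iter_r.
Qed.

Lemma ancP u v : reflect (exists n, iter n par v = u) (anc par u v).
Proof.
apply: (iffP existsP) => [[k /eqP Hk]|[n Hn]]; first by exists k.
have [small|big] := leqP n #|V|.
  by exists (Ordinal (n:=#|V|.+1) small); apply/eqP.
pose g (k : 'I_#|V|.+1) := iter k par v.
have : ~~ injectiveb g.
  apply/negP => /injectiveP /leq_card; by rewrite card_ord ltnn.
case/injectivePn => x [y nxy Exy].
have [i [j [lij Eij]]] : exists i j : 'I_#|V|.+1, i < j /\ g i = g j.
  move: nxy; rewrite neq_ltn => /orP [lt|lt]; first by exists x, y.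
  by exists y, x.
have Hr := @iter_cycle v i j lij Eij.
exists i; apply/eqP; rewrite /= Hr -Hn.
have Hin : i <= n by apply: leq_trans (ltnW big); rewrite -ltnS.
by rewrite -(subnK Hin) iterD Hr iter_r.
Qed.

Lemma anc_refl u : anc par u u.
Proof. by apply/ancP; exists 0. Qed.

Lemma anc_trans u v w : anc par u v -> anc par v w -> anc par u w.
Proof.
move=> /ancP [a Ha] /ancP [b Hb]; apply/ancP; exists (a + b).
by rewrite iterD Hb.
Qed.

Lemma anc_antisym u v : anc par u v -> anc par v u -> u = v.
Proof.
move=> /ancP [a Ha] /ancP [b Hb].
case: (posnP (a + b)) => [/eqP|pos].
  rewrite addn_eq0 => /andP [/eqP a0 /eqP b0]; by rewrite -Ha a0.
have E : iter 0 par v = iter (a + b) par v by rewrite addnC iterD Ha Hb.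
have vr := @iter_cycle v 0 (a+b) pos E; rewrite /= in vr.
by rewrite -Ha vr iter_r.
Qed.

Lemma anc_chain u v w : anc par u w -> anc par v w -> Defs.comparable par u v.
Proof.
move=> /ancP [a Ha] /ancP [b Hb]; rewrite /Defs.comparable.
have [lab|lba] := leqP a b.
  apply/orP; right; apply/ancP; exists (b - a).
  by rewrite -Ha -iterD subnK.
apply/orP; left; apply/ancP; exists (a - b).
by rewrite -Hb -iterD subnK // ltnW.
Qed.

Definition dep (v : V) := #|[set u | anc par u v]|.

Lemma dep_le u v : anc par u v -> dep u <= dep v.
Proof.
move=> H; apply: subset_leq_card; apply/subsetP => x; rewrite !inE => Hx.
exact: anc_trans Hx H.
Qed.

Lemma dep_lt u v : anc par u v -> u != v -> dep u < dep v.
Proof.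
move=> H nuv; apply: proper_card; apply/properP; split.
  apply/subsetP => x; rewrite !inE => Hx; exact: anc_trans Hx H.
exists v; rewrite !inE ?anc_refl //.
apply/negP => Hvu; move/negP: nuv; apply; apply/eqP; exact: anc_antisym.
Qed.

Lemma comp_dep u v : Defs.comparable par u v -> dep u <= dep v -> anc par u v.
Proof.
case/orP => // Hvu Hd.
have [<-|nvu] := eqVneq v u; first exact: anc_refl.
by have := @dep_lt v u Hvu nvu; rewrite ltnNge Hd.
Qed.

Lemma comp_dep_eq u v : Defs.comparable par u v -> dep u = dep v -> u = v.
Proof.
move=> C E; apply: anc_antisym; apply: comp_dep; rewrite ?E //.
by move: C; rewrite /Defs.comparable orbC.
Qed.

End Tree.

Section Main.
Variables (V1 V2 : finType) (r1 : V1) (r2 : V2) (par1 : V1 -> V1) (par2 : V2 -> V2).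
Variables (T1 : rooted_tree r1 par1) (T2 : rooted_tree r2 par2).
Variables (P : {set V1 * V2}) (p : V1 * V2).

Local Notation pre := (pre par1 par2).
Local Notation prec := (prec par1 par2).
Local Notation H := (Hset par1 par2 P p).
Local Notation d1 x := (dep par1 (fst x)).
Local Notation d2 x := (dep par2 (snd x)).

Lemma preI x y : anc par1 y.1 x.1 -> anc par2 y.2 x.2 -> pre x y.
Proof. by move=> a b; apply/andP; split. Qed.

Lemma pre_refl x : pre x x.
Proof. by rewrite /Defs.pre (anc_refl T1) (anc_refl T2). Qed.

Lemma pre_trans x y z : pre x y -> pre y z -> pre x z.
Proof.
rewrite /Defs.pre => /andP [a1 a2] /andP [b1 b2].
by rewrite (anc_trans T1 b1 a1) (anc_trans T2 b2 a2).
Qed.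

Lemma pre_antisym x y : pre x y -> pre y x -> x = y.
Proof.
case: x y => [x1 x2] [y1 y2]; rewrite /Defs.pre /= => /andP [a1 a2] /andP [b1 b2].
by rewrite (anc_antisym T1 a1 b1) (anc_antisym T2 a2 b2).
Qed.

Definition dsum (x : V1 * V2) := d1 x + d2 x.

Lemma prec_dsum x y : prec x y -> dsum y < dsum x.
Proof.
rewrite /Defs.prec /dsum => /andP [Hp nxy]; move: (Hp) => /andP [a1 a2].
have l1 := dep_le T1 a1; have l2 := dep_le T2 a2.
case: (ltngtP (d1 y) (d1 x)) => [lt1|lt1|e1]; first by rewrite -addSn leq_add.
  by move: l1; rewrite leqNgt lt1.
case: (ltngtP (d2 y) (d2 x)) => [lt2|lt2|e2]; first by rewrite e1 ltn_add2l.
  by move: l2; rewrite leqNgt lt2.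
have c1 : Defs.comparable par1 y.1 x.1 by rewrite /Defs.comparable a1.
have c2 : Defs.comparable par2 y.2 x.2 by rewrite /Defs.comparable a2.
have E1 := comp_dep_eq T1 c1 e1; have E2 := comp_dep_eq T2 c2 e2.
by move: nxy; clear -E1 E2; case: x y E1 E2 => [? ?] [? ?] /= -> ->; rewrite eqxx.
Qed.

Lemma H_P h : h \in H -> (h \in P) /\ prec h p.
Proof. by rewrite inE => /andP [-> /andP [->]]. Qed.

Lemma H_anti h h' : h \in H -> h' \in H -> pre h h' -> h = h'.
Proof.
move=> hH h'H hh'; apply/eqP; apply/negPn/negP => nhh'.
move: hH; rewrite inE => /andP [_ /andP [_ /existsP]]; apply; exists h'.
have [h'P h'p] := H_P h'H.
by rewrite h'P h'p /Defs.prec hh' nhh'.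
Qed.

Lemma H_above q : q \in P -> prec q p -> exists2 h, h \in H & pre q h.
Proof.
move=> qP qp.
pose S := [set h in P | pre q h && prec h p].
have qS : q \in S by rewrite inE qP pre_refl qp.
pose h := [arg min_(h < q in S) dsum h].
have [hS hmin] : h \in S /\ forall x, x \in S -> dsum h <= dsum x.
  by rewrite /h; case: arg_minnP.
move: (hS); rewrite inE => /and3P [hP qh hp].
exists h => //; rewrite inE hP hp /=.
apply/existsP => [[h' /andP [/andP [h'P hh'] h'p]]].
have h'S : h' \in S.
  by rewrite inE h'P h'p (pre_trans qh) //; case/andP: hh'.
by have := hmin h' h'S; rewrite leqNgt prec_dsum.
Qed.


Section E.
Variable e : V1 * V2.
Local Notation A := [set h in H | pre e h].

Lemma A_H x : x \in A -> x \in H.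
Proof. by rewrite inE => /andP []. Qed.

Lemma A_e x : x \in A -> pre e x.
Proof. by rewrite inE => /andP []. Qed.

Lemma A_comp1 x y : x \in A -> y \in A -> Defs.comparable par1 x.1 y.1.
Proof.
move=> /A_e /andP [a1 _] /A_e /andP [b1 _]; by have := anc_chain T1 a1 b1.
Qed.

Lemma A_comp2 x y : x \in A -> y \in A -> Defs.comparable par2 x.2 y.2.
Proof.
move=> /A_e /andP [_ a1] /A_e /andP [_ b1]; by have := anc_chain T2 a1 b1.
Qed.

Lemma A_eq1 x y : x \in A -> y \in A -> x.1 = y.1 -> x = y.
Proof.
move=> xA yA E; case/orP: (A_comp2 xA yA) => a.
  apply: esym; apply: H_anti (A_H yA) (A_H xA) _.
  by rewrite /Defs.pre E (anc_refl T1) a.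
apply: H_anti (A_H xA) (A_H yA) _.
by rewrite /Defs.pre E (anc_refl T1) a.
Qed.

Lemma A_eq2 x y : x \in A -> y \in A -> x.2 = y.2 -> x = y.
Proof.
move=> xA yA E; case/orP: (A_comp1 xA yA) => a.
  apply: esym; apply: H_anti (A_H yA) (A_H xA) _.
  by rewrite /Defs.pre E (anc_refl T2) a.
apply: H_anti (A_H xA) (A_H yA) _.
by rewrite /Defs.pre E (anc_refl T2) a.
Qed.

Lemma A_d1inj x y : x \in A -> y \in A -> d1 x = d1 y -> x = y.
Proof.
move=> xA yA E; apply: A_eq1 => //; by have := comp_dep_eq T1 (A_comp1 xA yA) E.
Qed.

Lemma A_d2inj x y : x \in A -> y \in A -> d2 x = d2 y -> x = y.
Proof.
move=> xA yA E; apply: A_eq2 => //; by have := comp_dep_eq T2 (A_comp2 xA yA) E.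
Qed.

Lemma A_anc1 x y : x \in A -> y \in A -> d1 x <= d1 y -> anc par1 x.1 y.1.
Proof. move=> xA yA; by have := comp_dep T1 (A_comp1 xA yA). Qed.

Lemma A_anc2 x y : x \in A -> y \in A -> d2 x <= d2 y -> anc par2 x.2 y.2.
Proof. move=> xA yA; by have := comp_dep T2 (A_comp2 xA yA). Qed.

Lemma A_cross x y : x \in A -> y \in A -> d1 x < d1 y -> d2 y < d2 x.
Proof.
move=> xA yA lt; rewrite ltnNge; apply/negP => le.
have E : y = x.
  apply: H_anti (A_H yA) (A_H xA) _.
  exact: preI (A_anc1 xA yA (ltnW lt)) (A_anc2 xA yA le).
by move: lt; rewrite E ltnn.
Qed.

Lemma glb_sub (X : {set V1 * V2}) q x : glb_is par1 par2 X q -> x \in X -> pre q x.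
Proof.
case/and5P => _ _ _ _ /forallP /(_ x) /implyP H1 xX; exact: H1.
Qed.

Lemma glb_gen (X : {set V1 * V2}) x y : X \subset A -> x \in X -> y \in X ->
  (forall w, w \in X -> d1 x <= d1 w <= d1 y) ->
  glb_is par1 par2 X (y.1, x.2).
Proof.
move=> /subsetP XA xX yX B; apply/and5P; split.
- by apply/set0Pn; exists x.
- apply/forallP => a; apply/implyP => aX; apply/forallP => b; apply/implyP => bX.
  by rewrite (A_comp1 (XA _ aX) (XA _ bX)) (A_comp2 (XA _ aX) (XA _ bX)).
- by apply/existsP; exists y; rewrite yX eqxx.
- by apply/existsP; exists x; rewrite xX eqxx.
apply/forallP => w; apply/implyP => wX /=.
have wA : w \in A by exact: XA.
have xA : x \in A by exact: XA.
have yA : y \in A by exact: XA.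
case/andP: (B w wX) => l1 l2.
rewrite (A_anc1 wA yA l2) /=; apply: (A_anc2 wA xA).
move: l1; rewrite leq_eqVlt => /orP [/eqP E|lt].
  by rewrite (A_d1inj xA wA E).
exact: ltnW (A_cross xA wA lt).
Qed.

Lemma glb_pair x y : x \in A -> y \in A -> d1 x < d1 y ->
  glb_is par1 par2 [set x; y] (y.1, x.2).
Proof.
move=> xA yA lt; apply: glb_gen; rewrite ?in_set2 ?eqxx ?orbT //.
  by apply/subsetP => w; rewrite in_set2 => /orP [] /eqP ->.
by move=> w; rewrite in_set2 => /orP [] /eqP ->; rewrite leqnn ?(ltnW lt).
Qed.

Lemma glb_pair_inv x y q : x \in A -> y \in A -> d1 x < d1 y ->
  glb_is par1 par2 [set x; y] q -> q = (y.1, x.2).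
Proof.
move=> xA yA lt G; have nxy : x != y.
  by apply/negP => /eqP E; move: lt; rewrite E ltnn.
have xX : x \in [set x; y] by rewrite in_set2 eqxx.
have yX : y \in [set x; y] by rewrite in_set2 eqxx orbT.
have /andP [qx1 qx2] := glb_sub G xX.
have /andP [qy1 qy2] := glb_sub G yX.
case/and5P: G => _ _ /existsP [a /andP [aX /eqP a1]] /existsP [b /andP [bX /eqP b2]] _.
have xy1 := A_anc1 xA yA (ltnW lt).
have yx2 := A_anc2 yA xA (ltnW (A_cross xA yA lt)).
case: q qx1 qx2 qy1 qy2 a1 b2 => q1 q2 /= qx1 qx2 qy1 qy2 a1 b2.
have E1 : q1 = y.1.
  move: aX; rewrite in_set2 => /orP [] /eqP aE; subst a => //.
  have E : x.1 = y.1 by apply: (anc_antisym T1) => //; rewrite a1.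
  by move: nxy; rewrite (A_eq1 xA yA E) eqxx.
have E2 : q2 = x.2.
  move: bX; rewrite in_set2 => /orP [] /eqP bE; subst b => //.
  have E : x.2 = y.2 by apply: (anc_antisym T2) => //; rewrite b2.
  by move: nxy; rewrite (A_eq2 xA yA E) eqxx.
by rewrite E1 E2.
Qed.


Lemma A_glbX (X : {set V1 * V2}) q : X \subset H -> pre e q ->
  glb_is par1 par2 X q -> X \subset A.
Proof.
move=> /subsetP XH eq G; apply/subsetP => x xX.
by rewrite inE XH //= (pre_trans eq (glb_sub G xX)).
Qed.

Lemma countT : A != set0 -> #|A| = (#|[set q in Tset par1 par2 P p | pre e q]|).+1.
Proof.
case/set0Pn => h0 h0A.
pose m := [arg min_(x < h0 in A) d1 x].
have [mA mmin] : m \in A /\ forall x, x \in A -> d1 m <= d1 x.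
  by rewrite /m; case: arg_minnP.
pose C (y : V1 * V2) := [set x in A | d1 x < d1 y].
pose pr y := [arg max_(x > m in C y) d1 x].
have prP : forall y, y \in A -> y != m ->
    [/\ pr y \in A, d1 (pr y) < d1 y & forall x, x \in A -> d1 x < d1 y -> d1 x <= d1 (pr y)].
  move=> y yA ym.
  have mC : m \in C y.
    rewrite /C inE mA /= ltn_neqAle mmin // andbT.
    by apply/negP => /eqP E; move: ym; rewrite (A_d1inj mA yA E) eqxx.
  rewrite /pr; case: arg_maxnP => // z zC zmax; move: zC; rewrite /C inE => /andP [zA zlt].
  by split => // x xA xlt; apply: zmax; rewrite /C inE xA.
pose g y := (y.1, (pr y).2).
have ginj : {in A :\ m &, injective g}.
  move=> y y'; rewrite !in_setD1 => /andP [_ yA] /andP [_ y'A] [E _].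
  by have := A_eq1 yA y'A E.
have Tdef : [set q in Tset par1 par2 P p | pre e q] = g @: (A :\ m).
  apply/eqP; rewrite eqEsubset; apply/andP; split; apply/subsetP => q.
  - rewrite in_set => /andP [qT eq].
    move: qT; rewrite in_set => /andP [/existsP [h /andP [hH /existsP [h' /andP [h'H /andP [nhh' G]]]]] NX].
    have key : forall x y, x \in A -> y \in A -> d1 x < d1 y ->
        glb_is par1 par2 [set x; y] q -> q \in g @: (A :\ m).
      move=> x y xA yA lt Gxy; have qE := glb_pair_inv xA yA lt Gxy.
      have ym : y != m.
        apply/negP => /eqP E; have := mmin x xA; by rewrite -E leqNgt lt.
      have [zA zlt zmax] := prP y yA ym.
      have xz : x = pr y.
        have le := zmax x xA lt.
        apply/eqP; apply/negPn/negP => nxz.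
        have ltxz : d1 x < d1 (pr y).
          rewrite ltn_neqAle le andbT; apply/negP => /eqP E.
          by move: nxz; rewrite (A_d1inj xA zA E) eqxx.
        move: NX => /existsP; apply; exists (x |: [set y; pr y]).
        have nxy : x != y by apply/negP => /eqP E; move: lt; rewrite E ltnn.
        have nyz : y != pr y by apply/negP => /eqP E; move: zlt; rewrite -E ltnn.
        have sA : x |: [set y; pr y] \subset A.
          by apply/subsetP => w; rewrite in_setU1 in_set2 => /or3P [] /eqP ->.
        apply/and3P; split.
        + apply/subsetP => w wX; apply: A_H; exact: (subsetP sA).
        + by rewrite cardsU1 cards2 in_set2 negb_or nxy nxz nyz.
        rewrite qE; apply: glb_gen => //.
        + by rewrite in_setU1 eqxx.
        + by rewrite in_setU1 in_set2 eqxx orbT.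
        move=> w; rewrite in_setU1 in_set2 => /or3P [] /eqP ->.
        + by rewrite leqnn ltnW.
        + by rewrite leqnn ltnW.
        by rewrite le ltnW.
      apply/imsetP; exists y; first by rewrite in_setD1 ym yA.
      by rewrite qE /g -xz.
    have sH : [set h; h'] \subset H.
      by apply/subsetP => w; rewrite in_set2 => /orP [] /eqP ->.
    have XA := A_glbX sH eq G.
    have hA : h \in A by apply: (subsetP XA); rewrite in_set2 eqxx.
    have h'A : h' \in A by apply: (subsetP XA); rewrite in_set2 eqxx orbT.
    case: (ltngtP (d1 h) (d1 h')) => lt.
    + exact: key hA h'A lt G.
    + by apply: (key h' h h'A hA lt); rewrite setUC in G.
    by move: nhh'; rewrite (A_d1inj hA h'A lt) eqxx.
  - case/imsetP => y; rewrite in_setD1 => /andP [ym yA] ->.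
    have [zA zlt zmax] := prP y yA ym.
    have eg : pre e (g y).
      apply: preI; first by case/andP: (A_e yA).
      by case/andP: (A_e zA).
    rewrite in_set eg andbT in_set; apply/andP; split.
      apply/existsP; exists (pr y); rewrite (A_H zA) /=.
      apply/existsP; exists y; rewrite (A_H yA) /=.
      apply/andP; split; last exact: glb_pair zA yA zlt.
      by apply/negP => /eqP E; move: zlt; rewrite E ltnn.
    apply/negP => /existsP [X /and3P [XH X2 G]].
    have XA := A_glbX XH eg G.
    case/and5P: (G) => _ _ /existsP [a /andP [aX /eqP a1]] /existsP [b /andP [bX /eqP b2]] _.
    have aE : a = y by apply: A_eq1 => //; exact: (subsetP XA).
    have bE : b = pr y by apply: A_eq2 => //; exact: (subsetP XA).
    have : ~~ (X \subset [set y; pr y]).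
      apply/negP => sub; have := leq_trans X2 (subset_leq_card sub).
      by rewrite cards2; case: (_ != _).
    case/subsetPn => c cX; rewrite in_set2 negb_or => /andP [cy cz].
    have cA : c \in A by exact: (subsetP XA).
    have /andP [c1 c2] := glb_sub G cX.
    have lt1 : d1 c < d1 y.
      rewrite ltn_neqAle (dep_le T1 c1) andbT; apply/negP => /eqP E.
      by move: cy; rewrite (A_d1inj cA yA E) eqxx.
    have lt2 : d2 c < d2 (pr y).
      rewrite ltn_neqAle (dep_le T2 c2) andbT; apply/negP => /eqP E.
      by move: cz; rewrite (A_d2inj cA zA E) eqxx.
    have := zmax c cA lt1; rewrite leqNgt; apply/negP/negPn.
    case: (ltngtP (d1 c) (d1 (pr y))) => // l.
      by have := A_cross cA zA l; rewrite ltnNge ltnW.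
    by move: cz; rewrite (A_d1inj cA zA l) eqxx.
by rewrite Tdef card_in_imset // (cardsD1 m A) mA.
Qed.

Lemma pointwise : fully par1 par2 e ->
  ([&& fully par1 par2 e, pre e p & [forall q in Pset par1 par2 P p, ~~ pre e q]] : nat)
    + #|A| = pre e p + #|[set q in Tset par1 par2 P p | pre e q]|.
Proof.
move=> fe; rewrite fe /=.
have [A0|An] := eqVneq A set0.
  have T0 : #|[set q in Tset par1 par2 P p | pre e q]| = 0.
    apply/eqP; rewrite cards_eq0; apply/eqP/setP => q; rewrite in_set0 in_set.
    apply/negP => /andP [qT eq]; move: qT; rewrite in_set.
    case/andP => /existsP [h /andP [hH /existsP [h' /andP [h'H /andP [_ G]]]]] _.
    have sH : [set h; h'] \subset H.
      by apply/subsetP => w; rewrite in_set2 => /orP [] /eqP ->.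
    have /subsetP /(_ h) := A_glbX sH eq G.
    by rewrite in_set2 eqxx A0 in_set0 => /(_ isT).
  rewrite A0 cards0 T0 !addn0; congr nat_of_bool.
  case pe: (pre e p) => //=.
  apply/forallP => q; apply/implyP; rewrite /Pset inE => /andP [qP qp].
  apply/negP => eq; have [h hH qh] := H_above qP qp.
  have : h \in A by rewrite inE hH (pre_trans eq qh).
  by rewrite A0 in_set0.
rewrite (countT An).
case/set0Pn: An => h hA.
have [hP hp] := H_P (A_H hA).
have pe : pre e p.
  by apply: pre_trans (A_e hA) _; case/andP: hp.
have -> : [forall q in Pset par1 par2 P p, ~~ pre e q] = false.
  apply/negP => /forallP /(_ h) /implyP; rewrite /Pset inE hP hp => /(_ isT).
  by rewrite (A_e hA).
by rewrite pe andbF add0n add1n.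
Qed.

End E.

Lemma sum_fcount f (S : {set V1 * V2}) :
  \sum_(q in S) fcount par1 par2 f q = \sum_e #|[set q in S | pre e q]| * f e.
Proof.
rewrite /fcount; under eq_bigr do rewrite big_mkcond.
rewrite exchange_big /=; apply: eq_bigr => e _.
rewrite -big_mkcondr sum_nat_const; congr (_ * _).
by apply: eq_card => q; rewrite !inE.
Qed.

Lemma sum_identity f (Sfull : forall e, (f e != 0)%N -> fully par1 par2 e) :
  Fcond par1 par2 f P p + \sum_(q in H) fcount par1 par2 f q =
  fcount par1 par2 f p + \sum_(q in Tset par1 par2 P p) fcount par1 par2 f q.
Proof.
rewrite !sum_fcount /Fcond /fcount (big_mkcond (fun e => [&& _, _ & _])).
rewrite (big_mkcond (fun e => pre e p)).
rewrite -!big_split /=; apply: eq_bigr => e _.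
have [f0|fn0] := eqVneq (f e) 0.
  rewrite f0 !muln0; case: ifP => _; case: ifP => _ //. 
have ifm : forall (b : bool) x, (if b then x else 0) = b * x.
  by move=> [] x; rewrite ?mul1n ?mul0n.
rewrite !ifm -!mulnDl. congr (_ * _). by have := pointwise (Sfull e fn0).
Qed.

End Main.

Import GRing.Theory Num.Theory.
Local Open Scope ring_scope.

Theorem theorem4
  (V1 V2 : finType) (r1 : V1) (r2 : V2) (par1 : V1 -> V1) (par2 : V2 -> V2)
  (T1 : rooted_tree r1 par1) (T2 : rooted_tree r2 par2) (h1 h2 : nat)
  (D1 : forall v, is_leaf par1 v -> has_depth r1 par1 v h1)
  (D2 : forall v, is_leaf par2 v -> has_depth r2 par2 v h2)
  (f : V1 * V2 -> nat)
  (Sfull : forall e, (f e != 0)%N -> fully par1 par2 e)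
  (P : {set V1 * V2}) (p : V1 * V2) :
  (Fcond par1 par2 f P p)%:Z =
    (fcount par1 par2 f p)%:Z
    - (\sum_(q in Hset par1 par2 P p) (fcount par1 par2 f q)%:Z)
    + (\sum_(q in Tset par1 par2 P p) (fcount par1 par2 f q)%:Z).
Proof.
have N := sum_identity T1 T2 P p Sfull.
have E : forall (S : {set V1 * V2}),
    \sum_(q in S) (fcount par1 par2 f q)%:Z = (\sum_(q in S) fcount par1 par2 f q)%:Z.
  move=> S; apply: esym; apply: (big_morph Posz PoszD (erefl _)).
rewrite !E; move: N.
set a := Fcond _ _ _ _ _; set b := \sum_(q in _) _; set c := fcount _ _ _ _.
set d := \sum_(q in Tset _ _ _ _) _.
move=> N; lia.
Qed.
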